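(* (i) If the coin process $\mathbf X$ satisfies the lower-tail condition: for every $\delta>0$ there exist constants $K$ and $m_0$ with \[\Pr\Big(\tfrac1m\log\tfrac{1}{P_{X^m}(X^m)}\le\underline H(\mathbf X)-\delta\Big)\le\frac{K}{m^2}\quad\text{for all }m\ge m_0,\] then for every target process $\mathbf Y$, $L^\star_{\mathrm{int}}(\mathbf X,\mathbf Y)\le\frac{H(\mathbf Y)}{\underline H(\mathbf X)}$. (ii) If the coin process satisfies the upper-tail condition: for every $\delta>0$ there exist constants $K$ and $m_0$ with \[\Pr\Big(\tfrac1m\log\tfrac{1}{P_{X^m}(X^m)}\ge\overline H(\mathbf X)+\delta\Big)\le\frac{K}{m^2}\quad\text{for all }m\ge m_0,\] then for every target process $\mathbf Y$, $L^\star(\mathbf X,\mathbf Y)\ge\frac{H(\mathbf Y)}{\overline H(\mathbf X)}$.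
   Context: Logarithms are base 2; a ratio with denominator $0$ is read as $+\infty$. $\mathcal X$, $\mathcal Y$ are finite; $\mathbf X=\{X^m\}$ (coin) and $\mathbf Y=\{Y^n\}$ (target) are arbitrary processes given by consistent distributions. $\overline H(\mathbf X)=\inf\{\lambda:\lim_n\Pr(\frac1n\log\frac{1}{P_{X^n}(X^n)}\ge\lambda)=0\}$, $\underline H(\mathbf X)=\sup\{\lambda:\lim_n\Pr(\frac1n\log\frac{1}{P_{X^n}(X^n)}\le\lambda)=0\}$, $H(\mathbf Y)=\limsup_n\frac1nH(Y^n)$ with $H(Y^n)$ the Shannon entropy. A random number generation algorithm for $Y^n$ is a map $\phi:\bigcup_{i\ge0}\mathcal X^i\to\{\bot\}\cup\mathcal Y^n$ whose leaves (finite $s$ with $\phi(s)\in\mathcal Y^n$ and $\phi(s')=\bot$ for all proper prefixes $s'$) satisfy $\sum_{\text{leaves }s:\phi(s)=y^n}P_{X^{|s|}}(s)=P_{Y^n}(y^n)$ for all $y^n$; its stopping time is the length of the leaf reached by $X_1,X_2,\dots$ ($\infty$ if none). For algorithms $\phi_n$ generating $Y^n$ with stopping times $T_n$, a rate $L\ge0$ is average achievable if $\limsup_n\mathbb E[T_n]/n\le L$; $L^\star(\mathbf X,\mathbf Y)$ is the infimum average achievable rate over all valid algorithms and $L^\star_{\mathrm{int}}(\mathbf X,\mathbf Y)$ that for the interval algorithm. Interval algorithm: with $\mathcal X=\{1,\dots,M\}$, $\mathcal I_\bot=[0,1)$ and, for $s\in\mathcal X^i$ with $\mathcal I_s=[\underline\alpha_s,\overline\alpha_s)$,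 $\mathcal I_{sx}=[\underline\alpha_s+(\overline\alpha_s-\underline\alpha_s)\sum_{k<x}P_{X_{i+1}|X^i}(k|s),\ \underline\alpha_s+(\overline\alpha_s-\underline\alpha_s)\sum_{k\le x}P_{X_{i+1}|X^i}(k|s))$; $\mathcal J_t$ for $t\in\mathcal Y^j$ likewise from $P_{Y_{j+1}|Y^j}$; stop at the first $m$ with $\mathcal I_{X^m}\subseteq\mathcal J_{y^n}$ for some $y^n$ and output that $y^n$. *)

(* Defs.v *)
From Stdlib Require Import Reals Lra Lia List Classical ClassicalEpsilon.
Import ListNotations.
Open Scope R_scope.

(* Alphabets: X = {0,...,M-1}, Y = {0,...,N-1} (ordered as nat).
   Strings are lists of letters; a process is a function assigning to every
   finite string s its probability P_{X^|s|}(s). *)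

Definition log2 (x : R) : R := ln x / ln 2.

Definition lsum {A : Type} (f : A -> R) (l : list A) : R :=
  fold_right (fun a acc => f a + acc) 0 l.

Fixpoint words (M m : nat) : list (list nat) :=
  match m with
  | O => [nil]
  | S m' => flat_map (fun s => map (fun k => s ++ [k]) (seq 0 M)) (words M m')
  end.

Definition process (M : nat) (P : list nat -> R) : Prop :=
  (forall s, 0 <= P s) /\ P nil = 1 /\
  (forall s, P s = lsum (fun k => P (s ++ [k])) (seq 0 M)).

Definition info (P : list nat -> R) (n : nat) (s : list nat) : R :=
  / INR n * log2 (/ P s).

Definition Pr_ge (M : nat) (P : list nat -> R) (n : nat) (lam : R) : R :=
  lsum (fun s => if Rle_dec lam (info P n s) then P s else 0) (words M n).
Definition Pr_le (M : nat) (P : list nat -> R) (n : nat) (lam : R) : R :=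
  lsum (fun s => if Rle_dec (info P n s) lam then P s else 0) (words M n).

Definition is_inf (A : R -> Prop) (x : R) : Prop :=
  (forall y, A y -> x <= y) /\ (forall z, (forall y, A y -> z <= y) -> z <= x).

Definition is_Hupper (M : nat) (P : list nat -> R) (h : R) : Prop :=
  is_inf (fun lam => Un_cv (fun n => Pr_ge M P n lam) 0) h.
Definition is_Hlower (M : nat) (P : list nat -> R) (h : R) : Prop :=
  is_lub (fun lam => Un_cv (fun n => Pr_le M P n lam) 0) h.

Definition entropy (N : nat) (P : list nat -> R) (n : nat) : R :=
  lsum (fun y => if Rlt_dec 0 (P y) then P y * log2 (/ P y) else 0) (words N n).

Definition is_limsup (u : nat -> R) (l : R) : Prop :=
  forall eps, 0 < eps ->
    (exists N0, forall n, (N0 <= n)%nat -> u n <= l + eps) /\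
    (forall N0, exists n, (N0 <= n)%nat /\ l - eps <= u n).

Definition lower_tail (M : nat) (P : list nat -> R) (hl : R) : Prop :=
  forall delta, 0 < delta -> exists K : R, exists m0 : nat,
    forall m : nat, (m0 <= m)%nat -> (1 <= m)%nat ->
      Pr_le M P m (hl - delta) <= K / (INR m ^ 2).
Definition upper_tail (M : nat) (P : list nat -> R) (hu : R) : Prop :=
  forall delta, 0 < delta -> exists K : R, exists m0 : nat,
    forall m : nat, (m0 <= m)%nat -> (1 <= m)%nat ->
      Pr_ge M P m (hu + delta) <= K / (INR m ^ 2).

(* Stopping rules: [stop s] means "the algorithm outputs at s".
   A leaf is a string at which it stops but at no proper prefix. *)
Definition is_leaf (stop : list nat -> Prop) (s : list nat) : Prop :=
  stop s /\ forall s' t, t <> nil -> s = s' ++ t -> ~ stop s'.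

Definition pind (A : Prop) (x : R) : R :=
  if excluded_middle_informative A then x else 0.

(* Pr(T = i) *)
Definition leafmass (M : nat) (P : list nat -> R) (stop : list nat -> Prop) (i : nat) : R :=
  lsum (fun s => pind (is_leaf stop s) (P s)) (words M i).

(* E[T] is finite and equals e: T < infinity a.s. and sum_i i Pr(T = i) = e. *)
Definition expected_time (M : nat) (P : list nat -> R) (stop : list nat -> Prop) (e : R) : Prop :=
  infinite_sum (leafmass M P stop) 1 /\
  infinite_sum (fun i => INR i * leafmass M P stop i) e.

(* limsup_n E[T_n]/n <= L  (with E[T_n] = +infinity allowed) *)
Definition rate_ok (M : nat) (P : list nat -> R) (stop : nat -> list nat -> Prop) (L : R) : Prop :=
  forall eps, 0 < eps -> exists n0 : nat, forall n : nat, (n0 <= n)%nat ->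
    exists e, expected_time M P (stop n) e /\ e / INR n <= L + eps.

(* Random number generation algorithm phi for Y^n: None = bottom. *)
Definition halts (phi : list nat -> option (list nat)) (s : list nat) : Prop :=
  exists y, phi s = Some y.

Definition valid_alg (M N : nat) (PX PY : list nat -> R) (n : nat)
    (phi : list nat -> option (list nat)) : Prop :=
  (forall s y, Forall (fun k => (k < M)%nat) s -> phi s = Some y -> In y (words N n)) /\
  (forall y, In y (words N n) ->
     infinite_sum
       (fun i => lsum (fun s => pind (is_leaf (halts phi) s /\ phi s = Some y) (PX s))
                      (words M i))
       (PY y)).

Definition achievable (M N : nat) (PX PY : list nat -> R) (L : R) : Prop :=
  exists phi : nat -> list nat -> option (list nat),
    (forall n, valid_alg M N PX PY n (phi n)) /\
    rate_ok M PX (fun n => halts (phi n)) L.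

(* Interval algorithm. The interval I_s = [fst, snd) built recursively:
   I_{s x} from I_s using P_{X_{i+1}|X^i}(k|s) = P(s k)/P(s). *)
Fixpoint ival_aux (P : list nat -> R) (pre : list nat) (lo hi : R) (s : list nat) : R * R :=
  match s with
  | nil => (lo, hi)
  | x :: s' =>
      let c := fun k => P (pre ++ [k]) / P pre in
      ival_aux P (pre ++ [x])
        (lo + (hi - lo) * lsum c (seq 0 x))
        (lo + (hi - lo) * lsum c (seq 0 (S x))) s'
  end.
Definition ival (P : list nat -> R) (s : list nat) : R * R := ival_aux P nil 0 1 s.

Definition isub (I J : R * R) : Prop :=
  forall x, fst I <= x < snd I -> fst J <= x < snd J.

Definition int_stop (N : nat) (PX PY : list nat -> R) (n : nat) (s : list nat) : Prop :=
  exists y, In y (words N n) /\ isub (ival PX s) (ival PY y).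

Definition int_achievable (M N : nat) (PX PY : list nat -> R) (L : R) : Prop :=
  rate_ok M PX (int_stop N PX PY) L.

(* Main.v *)
Require Import Defs.
From Stdlib Require Import Reals Lra Lia List Classical ClassicalEpsilon ZArith.
Import ListNotations.
Open Scope R_scope.


Lemma lsum_nil {A} (f : A -> R) : lsum f [] = 0.
Proof. reflexivity. Qed.
Lemma lsum_cons {A} (f : A -> R) a l : lsum f (a :: l) = f a + lsum f l.
Proof. reflexivity. Qed.
Lemma lsum_app {A} (f : A -> R) l1 l2 : lsum f (l1 ++ l2) = lsum f l1 + lsum f l2.
Proof. induction l1; simpl; [lra|]. unfold lsum in *; simpl in *. rewrite IHl1; lra. Qed.
Lemma lsum_plus {A} (f g : A -> R) l : lsum (fun a => f a + g a) l = lsum f l + lsum g l.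
Proof. induction l; unfold lsum in *; simpl in *; lra. Qed.
Lemma lsum_scal {A} (f : A -> R) c l : lsum (fun a => c * f a) l = c * lsum f l.
Proof. induction l; unfold lsum in *; simpl in *; [lra|]. rewrite IHl; lra. Qed.
Lemma lsum_minus {A} (f g : A -> R) l : lsum (fun a => f a - g a) l = lsum f l - lsum g l.
Proof. induction l; unfold lsum in *; simpl in *; lra. Qed.
Lemma lsum_le {A} (f g : A -> R) l : (forall a, In a l -> f a <= g a) -> lsum f l <= lsum g l.
Proof. induction l; intros H; unfold lsum in *; simpl in *; [lra|].
  specialize (IHl (fun a h => H a (or_intror h))). specialize (H a (or_introl eq_refl)). lra. Qed.
Lemma lsum_ext {A} (f g : A -> R) l : (forall a, In a l -> f a = g a) -> lsum f l = lsum g l.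
Proof. intros H. apply Rle_antisym; apply lsum_le; intros a h; rewrite H; auto; lra. Qed.
Lemma lsum_nonneg {A} (f : A -> R) l : (forall a, In a l -> 0 <= f a) -> 0 <= lsum f l.
Proof. intros H. replace 0 with (lsum (fun _ : A => 0) l). apply lsum_le; auto.
  induction l; unfold lsum in *; simpl in *; auto. rewrite IHl; auto. lra. Qed.
Lemma lsum_zero {A} (l : list A) : lsum (fun _ => 0) l = 0.
Proof. induction l; unfold lsum in *; simpl in *; auto. rewrite IHl; lra. Qed.
Lemma lsum_map {A B} (f : B -> R) (g : A -> B) l : lsum f (map g l) = lsum (fun a => f (g a)) l.
Proof. induction l; unfold lsum in *; simpl in *; auto. rewrite IHl; auto. Qed.
Lemma lsum_flat_map {A B} (f : B -> R) (g : A -> list B) l :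
  lsum f (flat_map g l) = lsum (fun a => lsum f (g a)) l.
Proof. induction l; simpl; auto. rewrite lsum_app, IHl. reflexivity. Qed.
Lemma lsum_swap {A B} (f : A -> B -> R) l1 l2 :
  lsum (fun a => lsum (fun b => f a b) l2) l1 = lsum (fun b => lsum (fun a => f a b) l1) l2.
Proof. induction l1.
  - rewrite lsum_nil. symmetry. apply lsum_zero.
  - rewrite lsum_cons, IHl1, <- lsum_plus. apply lsum_ext. intros. rewrite lsum_cons. reflexivity. Qed.
Lemma lsum_seq_S (f : nat -> R) s n : lsum f (seq s (S n)) = lsum f (seq s n) + f (s + n)%nat.
Proof. rewrite seq_S, lsum_app. rewrite lsum_cons, lsum_nil. lra. Qed.
Lemma lsum_sum_f (f : nat -> R) n : lsum f (seq 0 (S n)) = sum_f_R0 f n.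
Proof. induction n. unfold lsum; simpl; lra. rewrite lsum_seq_S, IHn. simpl. reflexivity. Qed.
Lemma lsum_mono_seq (f : nat -> R) n m : (n <= m)%nat -> (forall k, 0 <= f k) ->
  lsum f (seq 0 n) <= lsum f (seq 0 m).
Proof. intros H Hf. induction H; [lra|]. rewrite lsum_seq_S. specialize (Hf (0+m)%nat). lra. Qed.

Lemma words_In M m s : In s (words M m) <-> length s = m /\ Forall (fun k => (k < M)%nat) s.
Proof.
  revert s. induction m; intros s; simpl.
  - split. intros [<-|[]]. split; auto. intros [H _]. destruct s; [auto|discriminate].
  - rewrite in_flat_map. split.
    + intros [t [Ht Hin]]. apply in_map_iff in Hin. destruct Hin as [k [<- Hk]].
      apply in_seq in Hk. apply IHm in Ht. destruct Ht as [Hl Hf].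
      rewrite length_app; simpl. split; [lia|]. apply Forall_app; split; auto. constructor; [lia|constructor].
    + intros [Hl Hf]. destruct (@exists_last _ s) as [t [k Hs]].
      { intros ->; discriminate. }
      subst s. exists t. apply Forall_app in Hf. destruct Hf as [Hf1 Hf2].
      inversion Hf2; subst. rewrite length_app in Hl; simpl in Hl. split.
      apply IHm. split; auto; lia. apply in_map_iff. exists k. split; auto. apply in_seq; lia.
Qed.

Lemma words_NoDup M m : NoDup (words M m).
Proof.
  induction m; simpl. constructor; auto. constructor.
  induction IHm; simpl. constructor.
  apply NoDup_app; auto.
  - apply NoDup_map_inv with (f := fun l => last l 0%nat).
    rewrite map_map. replace (map (fun x0 => last (x ++ [x0]) 0%nat) (seq 0 M)) with (seq 0 M).
    apply seq_NoDup. rewrite map_ext with (g := fun x => x). rewrite map_id; auto.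
    intros a. rewrite last_last. auto.
  - intros a Ha1 Ha2. apply in_map_iff in Ha1. destruct Ha1 as [k [<- _]].
    apply in_flat_map in Ha2. destruct Ha2 as [y [Hy Hin]]. apply in_map_iff in Hin.
    destruct Hin as [k' [Heq _]]. apply app_inj_tail in Heq. destruct Heq; subst. auto.
Qed.

Lemma lsum_words_S {M m} (f : list nat -> R) :
  lsum f (words M (S m)) = lsum (fun s => lsum (fun k => f (s ++ [k])) (seq 0 M)) (words M m).
Proof. simpl. rewrite lsum_flat_map. apply lsum_ext; intros. apply lsum_map. Qed.

Lemma lsum_words_split M i j (F : list nat -> list nat -> R) :
  lsum (fun t => F t (firstn i t)) (words M (i + j)) =
  lsum (fun s => lsum (fun u => F (s ++ u) s) (words M j)) (words M i).
Proof.
  revert F. induction j; intros F.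
  - rewrite Nat.add_0_r. apply lsum_ext. intros s Hs. apply words_In in Hs.
    simpl. unfold lsum; simpl. rewrite app_nil_r, <- (proj1 Hs), firstn_all. lra.
  - rewrite Nat.add_succ_r, lsum_words_S.
    transitivity (lsum (fun t => lsum (fun k => F (t ++ [k]) (firstn i t)) (seq 0 M)) (words M (i + j))).
    { apply lsum_ext. intros t Ht. apply words_In in Ht. apply lsum_ext. intros k _.
      rewrite firstn_app. replace (i - length t)%nat with 0%nat by lia. simpl. rewrite app_nil_r. auto. }
    rewrite (IHj (fun t s => lsum (fun k => F (t ++ [k]) s) (seq 0 M))).
    apply lsum_ext. intros s _. rewrite lsum_words_S. apply lsum_ext. intros u _.
    apply lsum_ext. intros k _. rewrite app_assoc. auto.
Qed.

Lemma lsum_words_split' M i j (G : list nat -> R) :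
  lsum G (words M (i + j)) = lsum (fun s => lsum (fun u => G (s ++ u)) (words M j)) (words M i).
Proof. apply (lsum_words_split M i j (fun t _ => G t)). Qed.

Section Proc.
Variable M : nat.
Variable P : list nat -> R.
Hypothesis HP : process M P.

Lemma P_nonneg s : 0 <= P s.
Proof. apply HP. Qed.
Lemma P_ext s j : P s = lsum (fun u => P (s ++ u)) (words M j).
Proof.
  induction j. simpl. unfold lsum; simpl. rewrite app_nil_r; lra.
  rewrite IHj, lsum_words_S. apply lsum_ext. intros u _.
  rewrite (proj2 (proj2 HP) (s ++ u)). apply lsum_ext. intros. rewrite app_assoc; auto.
Qed.
Lemma P_total m : lsum P (words M m) = 1.
Proof. rewrite <- (proj1 (proj2 HP)). rewrite (P_ext [] m). apply lsum_ext. auto. Qed.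
Lemma P_child_le s k : (k < M)%nat -> P (s ++ [k]) <= P s.
Proof.
  intros Hk. rewrite (proj2 (proj2 HP) s).
  assert (In k (seq 0 M)) by (apply in_seq; lia).
  revert H. generalize (seq 0 M). induction l; intros H; [destruct H|]. rewrite lsum_cons.
  destruct H as [<-|H].
  - pose proof (lsum_nonneg (fun k => P (s ++ [k])) l (fun a _ => P_nonneg _)). lra.
  - specialize (IHl H). pose proof (P_nonneg (s ++ [a])). lra.
Qed.
Lemma P_ext_le s u : Forall (fun k => (k < M)%nat) u -> P (s ++ u) <= P s.
Proof.
  revert s. induction u using rev_ind; intros s Hu.
  - rewrite app_nil_r; lra.
  - apply Forall_app in Hu. destruct Hu as [H1 H2]. inversion H2; subst.
    rewrite app_assoc. eapply Rle_trans. apply P_child_le; auto. apply IHu; auto.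
Qed.
Lemma P_le1 s : Forall (fun k => (k < M)%nat) s -> P s <= 1.
Proof. intros H. rewrite <- (proj1 (proj2 HP)). apply (P_ext_le [] s H). Qed.
End Proc.


Lemma pind_true (A : Prop) x : A -> pind A x = x.
Proof. intros H. unfold pind. destruct excluded_middle_informative; tauto. Qed.
Lemma pind_false (A : Prop) x : ~ A -> pind A x = 0.
Proof. intros H. unfold pind. destruct excluded_middle_informative; tauto. Qed.
Lemma pind_cases (A : Prop) x : (A /\ pind A x = x) \/ (~ A /\ pind A x = 0).
Proof. unfold pind. destruct excluded_middle_informative; tauto. Qed.
Lemma pind_lsum {T} (A : Prop) (f : T -> R) l : pind A (lsum f l) = lsum (fun a => pind A (f a)) l.
Proof. destruct (pind_cases A (lsum f l)) as [[H ->]|[H ->]].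
  apply lsum_ext; intros; rewrite pind_true; auto.
  symmetry; rewrite <- (lsum_zero l). apply lsum_ext; intros; rewrite pind_false; auto. Qed.
Lemma pind_mult (A : Prop) x y : pind A (x * y) = pind A x * y.
Proof. destruct (pind_cases A x) as [[H ->]|[H ->]]; [rewrite pind_true|rewrite pind_false]; auto; lra. Qed.
Lemma pind_1 (A : Prop) x : pind A x = pind A 1 * x.
Proof. rewrite <- pind_mult. f_equal; lra. Qed.
Lemma pind_nonneg (A : Prop) x : 0 <= x -> 0 <= pind A x.
Proof. destruct (pind_cases A x) as [[H ->]|[H ->]]; lra. Qed.
Lemma pind_le (A : Prop) x : 0 <= x -> pind A x <= x.
Proof. destruct (pind_cases A x) as [[H ->]|[H ->]]; lra. Qed.
Lemma pind_ext (A B : Prop) x : (A <-> B) -> pind A x = pind B x.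
Proof. intros H. destruct (pind_cases A x) as [[H1 ->]|[H1 ->]].
  rewrite pind_true; tauto. rewrite pind_false; tauto. Qed.
Lemma pind_mono (A B : Prop) x : 0 <= x -> (A -> B) -> pind A x <= pind B x.
Proof. intros H0 H. destruct (pind_cases A x) as [[H1 ->]|[H1 ->]].
  rewrite pind_true; auto; lra. apply pind_nonneg; auto. Qed.

Lemma lsum_single (f : nat -> R) i0 m : (i0 <= m)%nat -> f i0 = 1 ->
  (forall i, (i <= m)%nat -> i <> i0 -> f i = 0) -> lsum f (seq 0 (S m)) = 1.
Proof.
  intros Hi H1 H0. induction m.
  - assert (i0 = 0%nat) by lia. subst. unfold lsum; simpl. rewrite H1; lra.
  - rewrite lsum_seq_S. simpl (0 + S m)%nat. destruct (Nat.eq_dec i0 (S m)).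
    + subst. rewrite H1.
      replace (lsum f (seq 0 (S m))) with (lsum (fun _ => 0) (seq 0 (S m))). rewrite lsum_zero. lra.
      symmetry; apply lsum_ext. intros a Ha. apply in_seq in Ha. apply H0; lia.
    + rewrite IHm; try lia. rewrite H0; auto. lra. intros; apply H0; lia.
Qed.

Lemma lsum_const (c : R) n : lsum (fun _ => c) (seq 0 n) = INR n * c.
Proof. induction n. unfold lsum; simpl; lra. rewrite lsum_seq_S, IHn, S_INR. lra. Qed.

Section Stop.
Variable M : nat.
Variable P : list nat -> R.
Hypothesis HP : process M P.
Variable stop : list nat -> Prop.

Definition stopped_by (m : nat) (t : list nat) : Prop :=
  exists i, (i <= m)%nat /\ stop (firstn i t).

Lemma firstn_prefix_eq (t s' t' : list nat) i :
  firstn i t = s' ++ t' -> firstn (length s') t = s'.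
Proof.
  intros H. assert (length s' <= i)%nat.
  { assert (length (firstn i t) = length (s' ++ t')) by (rewrite H; auto).
    rewrite length_app, length_firstn in H0. lia. }
  assert (E: firstn (length s') (firstn i t) = firstn (length s') t) by (rewrite firstn_firstn, Nat.min_l; auto).
  rewrite <- E, H.
  rewrite firstn_app, Nat.sub_diag, firstn_all. simpl. apply app_nil_r.
Qed.

Lemma lcount (t : list nat) m : length t = m ->
  lsum (fun i => pind (is_leaf stop (firstn i t)) 1) (seq 0 (S m)) = pind (stopped_by m t) 1.
Proof.
  intros Hl. destruct (classic (stopped_by m t)) as [Hs|Hs].
  - rewrite pind_true; auto.
    assert (exists i0, (i0 <= m)%nat /\ stop (firstn i0 t) /\ forall j, (j < i0)%nat -> ~ stop (firstn j t)) as [i0 [Hi0 [Hst Hmin]]].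
    { destruct Hs as [i [Hi Hst]]. induction i as [i IH] using (well_founded_induction Wf_nat.lt_wf).
      destruct (classic (exists j, (j < i)%nat /\ stop (firstn j t))) as [[j [Hj Hsj]]|Hn].
      - apply (IH j Hj); auto; lia.
      - exists i. repeat split; auto. intros j Hj Hsj. apply Hn; eauto. }
    apply (lsum_single _ i0); auto.
    + apply pind_true. split; auto. intros s' t' Hne Heq Hs'.
      apply (Hmin (length s')). 
      * assert (length (firstn i0 t) = length (s' ++ t')) by (rewrite Heq; auto).
        rewrite length_app, length_firstn in H. destruct t'; [congruence|]. simpl in H. lia.
      * rewrite (firstn_prefix_eq _ _ _ _ Heq). auto.
    + intros i Hi Hne. apply pind_false. intros [Hsi Hleaf].
      destruct (Nat.lt_ge_cases i i0). apply (Hmin i); auto.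
      apply (Hleaf (firstn i0 t) (firstn (i - i0) (skipn i0 t))).
      * intros He. apply (f_equal (@length nat)) in He. rewrite length_firstn, length_skipn in He. simpl in He. lia.
      * rewrite <- (firstn_skipn i0 t) at 1. rewrite firstn_app, length_firstn.
        rewrite firstn_firstn. rewrite (Nat.min_r i i0) by lia. rewrite (Nat.min_l i0 (length t)) by lia. auto.
      * auto.
  - rewrite pind_false; auto. rewrite <- (lsum_zero (seq 0 (S m))). apply lsum_ext.
    intros i Hi. apply in_seq in Hi. apply pind_false. intros [H _]. apply Hs. exists i; split; auto; lia.
Qed.

Lemma leaf_level (G : list nat -> R) i m : (i <= m)%nat ->
  lsum (fun s => pind (is_leaf stop s) (lsum (fun u => G (s ++ u)) (words M (m - i)))) (words M i) =
  lsum (fun t => pind (is_leaf stop (firstn i t)) (G t)) (words M m).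
Proof.
  intros H. replace (words M m) with (words M (i + (m - i))) by (f_equal; lia).
  pose proof (lsum_words_split M i (m - i) (fun t s => pind (is_leaf stop s) (G t))) as E.
  cbv beta in E. rewrite E.
  apply lsum_ext. intros. apply pind_lsum.
Qed.

Lemma leaf_sum_level (G : list nat -> R) m :
  lsum (fun i => lsum (fun s => pind (is_leaf stop s) (lsum (fun u => G (s ++ u)) (words M (m - i)))) (words M i)) (seq 0 (S m))
  = lsum (fun t => pind (stopped_by m t) (G t)) (words M m).
Proof.
  rewrite (lsum_ext _ (fun i => lsum (fun t => pind (is_leaf stop (firstn i t)) (G t)) (words M m))).
  2:{ intros i Hi. apply in_seq in Hi. apply leaf_level. lia. }
  rewrite lsum_swap. apply lsum_ext. intros t Ht. apply words_In in Ht.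
  rewrite (pind_1 (stopped_by m t)), <- (lcount t m) by tauto.
  rewrite (lsum_ext _ (fun i => pind (is_leaf stop (firstn i t)) 1 * G t)).
  2:{ intros; apply pind_1. }
  rewrite (lsum_ext _ (fun i => G t * pind (is_leaf stop (firstn i t)) 1)) by (intros; lra).
  rewrite lsum_scal. lra.
Qed.

Lemma leaf_sum_level_le (G : list nat -> R) m : (forall t, 0 <= G t) ->
  lsum (fun i => lsum (fun s => pind (is_leaf stop s) (lsum (fun u => G (s ++ u)) (words M (m - i)))) (words M i)) (seq 0 (S m))
  <= lsum G (words M m).
Proof. intros H. rewrite leaf_sum_level. apply lsum_le. intros; apply pind_le; auto. Qed.

Definition alive m := lsum (fun t => pind (~ stopped_by m t) (P t)) (words M m).

Lemma leafmass_level m :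
  lsum (leafmass M P stop) (seq 0 (S m)) + alive m = 1.
Proof.
  unfold leafmass, alive.
  rewrite (lsum_ext _ (fun i => lsum (fun s => pind (is_leaf stop s) (lsum (fun u => P (s ++ u)) (words M (m - i)))) (words M i))).
  2:{ intros i _. apply lsum_ext. intros s _. rewrite <- P_ext; auto. }
  rewrite leaf_sum_level, <- lsum_plus. rewrite <- (P_total M P HP m). apply lsum_ext.
  intros t _. destruct (classic (stopped_by m t)).
  rewrite pind_true, pind_false; auto; lra. rewrite pind_false, pind_true; auto; lra.
Qed.

Lemma leafmass_nonneg i : 0 <= leafmass M P stop i.
Proof. apply lsum_nonneg. intros. apply pind_nonneg; apply (P_nonneg M); auto. Qed.

Lemma alive_nonneg m : 0 <= alive m.
Proof. apply lsum_nonneg. intros. apply pind_nonneg; apply (P_nonneg M); auto. Qed.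

Lemma alive_decr m : alive (S m) <= alive m.
Proof. pose proof (leafmass_level m). pose proof (leafmass_level (S m)).
  rewrite lsum_seq_S in H0. pose proof (leafmass_nonneg (0 + S m)). lra. Qed.

Lemma alive_le_notstop m : alive m <= lsum (fun t => pind (~ stop t) (P t)) (words M m).
Proof. apply lsum_le. intros t Ht. apply words_In in Ht. apply pind_mono. apply (P_nonneg M); auto.
  intros H1 H2. apply H1. exists m. split; auto. rewrite <- (proj1 Ht), firstn_all. auto. Qed.

Lemma expected_from_alive B : (forall m, lsum alive (seq 0 (S m)) <= B) ->
  exists e, expected_time M P stop e /\ e <= B.
Proof.
  intros HB.
  assert (Hdec : forall m, (INR (S m)) * alive m <= B).
  { intros m. eapply Rle_trans; [|apply (HB m)].
    assert (Hk: forall k, (k <= m)%nat -> alive m <= alive k).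
    { intros k Hk. induction m. assert (k = 0%nat) by lia. subst; lra.
      destruct (Nat.eq_dec k (S m)). subst; lra. pose proof (alive_decr m). specialize (IHm ltac:(lia)). lra. }
    rewrite <- lsum_const. apply lsum_le. intros a Ha. apply in_seq in Ha. apply Hk. lia. }
  set (q := leafmass M P stop).
  assert (Hid : forall m, lsum (fun i => INR i * q i) (seq 0 (S m)) + INR m * alive m = lsum alive (seq 0 m)).
  { induction m.
    - unfold lsum; simpl. lra.
    - rewrite (lsum_seq_S (fun i => INR i * q i) 0 (S m)), (lsum_seq_S alive 0 m). simpl (0 + _)%nat.
      pose proof (leafmass_level m). pose proof (leafmass_level (S m)).
      rewrite lsum_seq_S in H0. simpl (0 + _)%nat in H0. fold q in H, H0.
      assert (Hq : q (S m) = alive m - alive (S m)) by lra. rewrite Hq.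
      rewrite <- IHm. rewrite S_INR. ring. }
  assert (Hpart : forall m, lsum (fun i => INR i * q i) (seq 0 (S m)) <= lsum alive (seq 0 m)).
  { intros m. rewrite <- Hid. pose proof (alive_nonneg m). pose proof (pos_INR m).
    pose proof (Rmult_le_pos _ _ H0 H). lra. }
  assert (Hgrow : Un_growing (sum_f_R0 (fun i => INR i * q i))).
  { intros n. rewrite tech5. pose proof (leafmass_nonneg (S n)). pose proof (pos_INR (S n)). fold q in H.
    pose proof (Rmult_le_pos _ _ H0 H). lra. }
  assert (Hub : forall m, sum_f_R0 (fun i => INR i * q i) m <= B).
  { intros m. rewrite <- lsum_sum_f. eapply Rle_trans. apply Hpart. destruct m. unfold lsum; simpl.
    specialize (HB 0%nat). pose proof (alive_nonneg 0). unfold lsum in HB; simpl in HB. lra.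
    apply HB. }
  destruct (growing_cv _ Hgrow) as [e He]. { exists B. intros x [m ->]. apply Hub. }
  exists e. split; [split|].
  -
    intros eps Heps. 
    destruct (archimed (B / eps)) as [Har _].
    assert (0 <= B). { specialize (HB 0%nat). pose proof (alive_nonneg 0). unfold lsum in HB; simpl in HB. lra. }
    destruct (INR_unbounded (B / eps)) as [N0 HN0].
    exists N0. intros n Hn. unfold R_dist. rewrite <- lsum_sum_f.
    pose proof (leafmass_level n). pose proof (alive_nonneg n). fold q in H0 |- *.
    rewrite Rabs_left1 by lra. specialize (Hdec n).
    assert (INR n >= INR N0) by (apply Rle_ge, le_INR; lia).
    assert (B / eps < INR (S n)) by (rewrite S_INR; lra).
    apply Rmult_lt_reg_l with (INR (S n)). apply lt_0_INR; lia.
    apply (Rmult_lt_compat_r eps) in H3; auto. unfold Rdiv in H3. rewrite Rmult_assoc, Rinv_l in H3 by lra. nra.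
  - exact He.
  - apply Rle_trans with B; [|lra]. apply Rnot_lt_le. intros Hlt.
    destruct (He (e - B)) as [N0 HN0]. lra. specialize (HN0 N0 (le_n _)). specialize (Hub N0).
    unfold R_dist in HN0. rewrite Rabs_left1 in HN0 by lra. lra.
Qed.

End Stop.


Lemma ln2_pos : 0 < ln 2.
Proof. rewrite <- ln_1. apply ln_increasing; lra. Qed.

Lemma log2_inv_nonneg p : 0 < p -> p <= 1 -> 0 <= log2 (/ p).
Proof. intros. unfold log2. apply Rmult_le_pos; [|left; apply Rinv_0_lt_compat, ln2_pos].
  destruct (Rle_lt_or_eq_dec _ _ H0). rewrite ln_Rinv by lra.
  assert (ln p < ln 1) by (apply ln_increasing; lra). rewrite ln_1 in H1. lra. subst. rewrite Rinv_1, ln_1; lra. Qed.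

Lemma log2_inv_anti p q : 0 < p -> p <= q -> log2 (/ q) <= log2 (/ p).
Proof. intros. unfold log2. apply Rmult_le_compat_r; [left; apply Rinv_0_lt_compat, ln2_pos|].
  rewrite !ln_Rinv by lra. destruct (Rle_lt_or_eq_dec _ _ H0). assert (ln p < ln q) by (apply ln_increasing; lra). lra.
  subst; lra. Qed.

Lemma ceil_nat x : 0 <= x -> exists J : nat, x < INR J <= x + 1.
Proof. intros Hx. destruct (archimed x) as [H1 H2]. exists (Z.to_nat (up x)).
  assert (0 < up x)%Z. { apply lt_IZR. simpl. lra. }
  rewrite INR_IZR_INZ, Z2Nat.id by lia. lra. Qed.

Lemma lsum_count_ge (F : nat -> R) v a b n : 0 <= v -> (b <= n)%nat -> (forall m, 0 <= F m) ->
  (forall m, (a <= m)%nat -> (m < b)%nat -> v <= F m) -> INR (b - a) * v <= lsum F (seq 0 n).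
Proof.
  intros Hv Hb HF HFv. induction n.
  - assert (b = 0%nat) by lia. subst. simpl. lra.
  - rewrite lsum_seq_S. simpl (0 + n)%nat. destruct (Nat.eq_dec b (S n)).
    + subst. destruct (le_lt_dec a n).
      * assert (E: (S n - a = S (n - a))%nat) by lia. rewrite E, S_INR.
        assert (INR (n - a) * v <= lsum F (seq 0 n)).
        { clear IHn. induction n. replace (0 - a)%nat with 0%nat by lia. simpl. lra.
          rewrite lsum_seq_S. simpl (0 + n)%nat. destruct (le_lt_dec a n).
          - replace (S n - a)%nat with (S (n - a)) by lia. rewrite S_INR.
            assert (INR (n - a) * v <= lsum F (seq 0 n)) by (apply IHn; intros; try apply HFv; lia).
            specialize (HFv n ltac:(lia) ltac:(lia)). lra.
          - replace (S n - a)%nat with 0%nat by lia. simpl. rewrite Rmult_0_l.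
            pose proof (lsum_nonneg F (seq 0 n) (fun m _ => HF m)). specialize (HF n). lra. }
        specialize (HFv n ltac:(lia) ltac:(lia)). lra.
      * replace (S n - a)%nat with 0%nat by lia. simpl. rewrite Rmult_0_l.
        pose proof (lsum_nonneg F (seq 0 n) (fun m _ => HF m)). specialize (HF n). lra.
    + specialize (IHn ltac:(lia)). specialize (HF n). lra.
Qed.

Lemma lsum_restrict (F : nat -> R) a m : (forall i, 0 <= F i) ->
  lsum (fun i => pind (i <= m)%nat (F i)) (seq 0 a) <= lsum F (seq 0 (S m)).
Proof.
  intros HF. assert (forall a, lsum (fun i => pind (i <= m)%nat (F i)) (seq 0 a) = lsum F (seq 0 (Nat.min a (S m)))).
  { induction a0. reflexivity. rewrite lsum_seq_S, IHa0. simpl (0 + a0)%nat. destruct (le_lt_dec a0 m).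
    - rewrite pind_true by lia. replace (Nat.min (S a0) (S m)) with (S (Nat.min a0 (S m))) by lia.
      rewrite lsum_seq_S. replace (0 + Nat.min a0 (S m))%nat with a0 by lia. auto.
    - rewrite pind_false by lia. replace (Nat.min (S a0) (S m)) with (Nat.min a0 (S m)) by lia. lra. }
  rewrite H. apply lsum_mono_seq; auto. lia.
Qed.

Lemma lsum_count_lt a n : lsum (fun m => pind (m < a)%nat 1) (seq 0 n) <= INR a.
Proof. pose proof (lsum_restrict (fun _ => 1) n (a - 1)). destruct a.
  - simpl INR. right. transitivity (lsum (fun _ : nat => 0) (seq 0 n)). apply lsum_ext. intros. apply pind_false. lia. apply lsum_zero.
  - rewrite (lsum_ext _ (fun i => pind (i <= S a - 1)%nat 1)). eapply Rle_trans. apply H. intros; lra.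
    rewrite lsum_const. replace (S (S a - 1)) with (S a) by lia. lra.
    intros; apply pind_ext; lia. Qed.

Lemma sum_inv_sq n : lsum (fun m => pind (1 <= m)%nat (/ (INR m ^ 2))) (seq 0 n) <= 2.
Proof.
  assert (forall n, (1 <= n)%nat -> lsum (fun m => pind (1 <= m)%nat (/ (INR m ^ 2))) (seq 0 (S n)) <= 2 - / INR n).
  { induction n0; intros H. lia. destruct n0.
    - unfold lsum; simpl. rewrite pind_false by lia. rewrite pind_true by lia. simpl. lra.
    - rewrite lsum_seq_S. simpl (0 + _)%nat. rewrite pind_true by lia. specialize (IHn0 ltac:(lia)).
      assert (/ (INR (S (S n0)) ^ 2) <= (/ INR (S n0)) - (/ INR (S (S n0)))).
      { assert (E: (/ INR (S n0)) - (/ INR (S (S n0))) = / (INR (S n0) * INR (S (S n0)))).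
        { rewrite (S_INR (S n0)). assert (0 < INR (S n0)) by (apply lt_0_INR; lia). field. lra. }
        rewrite E. apply Rinv_le_contravar.
        apply Rmult_lt_0_compat; apply lt_0_INR; lia.
        rewrite (S_INR (S n0)). pose proof (pos_INR (S n0)). nra. }
      lra. }
  destruct n. unfold lsum; simpl; lra. destruct n. unfold lsum; simpl. rewrite pind_false by lia. lra.
  pose proof (H (S n) ltac:(lia)). pose proof (pos_INR (S n)). assert (0 < / INR (S n)).
  apply Rinv_0_lt_compat. apply lt_0_INR; lia. lra.
Qed.

Lemma NoDup_pind_some {A} (l : list A) (v : option A) x : NoDup l -> 0 <= x ->
  lsum (fun y => pind (v = Some y) x) l <= x.
Proof.
  intros H Hx. induction H. unfold lsum; simpl; lra. rewrite lsum_cons.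
  destruct (classic (v = Some x0)).
  - rewrite pind_true by auto.
    assert (E: lsum (fun y => pind (v = Some y) x) l = lsum (fun _ => 0) l).
    { apply lsum_ext. intros a Ha.
      apply pind_false. intros E. rewrite H1 in E. inversion E; subst. auto. }
    rewrite E, lsum_zero. lra.
  - rewrite pind_false by auto. lra.
Qed.

Lemma lsum_elem_le {A} (f : A -> R) l a : In a l -> (forall b, In b l -> 0 <= f b) -> f a <= lsum f l.
Proof. induction l; intros Ha H; [destruct Ha|]. rewrite lsum_cons. destruct Ha as [<-|Ha].
  pose proof (lsum_nonneg f l (fun b h => H b (or_intror h))). lra.
  specialize (IHl Ha (fun b h => H b (or_intror h))). specialize (H a0 (or_introl eq_refl)). lra. Qed.

Lemma partial_le_sum (u : nat -> R) l I : (forall i, 0 <= u i) -> infinite_sum u l -> sum_f_R0 u I <= l.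
Proof. intros H Hs. apply growing_ineq; auto. intros n. rewrite tech5. specialize (H (S n)). lra. Qed.

Lemma lsum_eventually {A} (f : A -> R) (h : nat -> A -> R) l :
  (forall a, In a l -> exists N0, forall Mb, (N0 <= Mb)%nat -> f a <= h Mb a) ->
  exists N0, forall Mb, (N0 <= Mb)%nat -> lsum f l <= lsum (h Mb) l.
Proof.
  induction l; intros H. exists 0%nat. intros. unfold lsum; simpl; lra.
  destruct (H a (or_introl eq_refl)) as [N1 H1]. destruct IHl as [N2 H2]. intros; apply H; right; auto.
  exists (Nat.max N1 N2). intros Mb HMb. rewrite !lsum_cons. specialize (H1 Mb ltac:(lia)). specialize (H2 Mb ltac:(lia)). lra.
Qed.


Lemma pind_le_le (A : Prop) x y : 0 <= x -> x <= y -> pind A x <= pind A y.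
Proof. intros. destruct (classic A). rewrite !pind_true; auto. rewrite !pind_false; auto; lra. Qed.

Section Part2.
Variables (M N : nat) (PX PY : list nat -> R).
Hypothesis HX : process M PX.
Hypothesis HY : process N PY.
Variable phi : list nat -> option (list nat).
Variable n : nat.
Hypothesis Hvalid : valid_alg M N PX PY n phi.
Variable e : R.
Hypothesis He : expected_time M PX (halts phi) e.
Variable c : R.
Hypothesis Hc : 0 < c.

Definition Xs (s : list nat) := PX s * log2 (/ PX s).
Definition Gm (m : nat) (t : list nat) := if Rle_dec c (info PX m t) then PX t else 0.
Let stop := halts phi.

Lemma Xs_nonneg s : Forall (fun k => (k < M)%nat) s -> 0 <= Xs s.
Proof. intros H. unfold Xs. destruct (Rle_lt_or_eq_dec _ _ (P_nonneg M PX HX s)).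
  apply Rmult_le_pos; [lra|]. apply log2_inv_nonneg; auto. apply (P_le1 M); auto.
  rewrite <- e0. lra. Qed.

Lemma Gm_nonneg m t : 0 <= Gm m t.
Proof. unfold Gm. destruct Rle_dec; [apply (P_nonneg M); auto|lra]. Qed.

Lemma leaf_bound i s : In s (words M i) -> exists Nb, forall Mb, (Nb <= Mb)%nat ->
  pind (is_leaf stop s) (Xs s) <= c * (INR i + 1) * pind (is_leaf stop s) (PX s) +
   c * lsum (fun m => pind (1 <= m)%nat (pind (i <= m)%nat (pind (is_leaf stop s)
          (lsum (fun u => Gm m (s ++ u)) (words M (m - i)))))) (seq 0 (S Mb)).
Proof.
  intros Hs. pose proof Hs as Hs'. apply words_In in Hs'. destruct Hs' as [Hlen Hfa].
  assert (Hrhs : forall Mb, 0 <= lsum (fun m => pind (1 <= m)%nat (pind (i <= m)%nat (pind (is_leaf stop s)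
          (lsum (fun u => Gm m (s ++ u)) (words M (m - i)))))) (seq 0 (S Mb))).
  { intros. apply lsum_nonneg. intros. repeat apply pind_nonneg. apply lsum_nonneg. intros; apply Gm_nonneg. }
  destruct (classic (is_leaf stop s)) as [Hl|Hl].
  2:{ exists 0%nat. intros. rewrite !pind_false by auto. specialize (Hrhs Mb). pose proof (Rmult_le_pos _ _ (Rlt_le _ _ Hc) Hrhs). lra. }
  destruct (Rle_lt_or_eq_dec _ _ (P_nonneg M PX HX s)) as [Hp|Hp].
  2:{ exists 0%nat. intros. rewrite !pind_true by auto. unfold Xs. rewrite <- Hp.
      specialize (Hrhs Mb). pose proof (Rmult_le_pos _ _ (Rlt_le _ _ Hc) Hrhs). lra. }
  set (g := log2 (/ PX s)).
  assert (Hg : 0 <= g) by (apply log2_inv_nonneg; auto; apply (P_le1 M); auto).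
  destruct (ceil_nat (g / c)) as [J [HJ1 HJ2]]. { apply Rmult_le_pos; auto. left; apply Rinv_0_lt_compat; auto. }
  exists J. intros Mb HMb. rewrite !pind_true by auto.
  set (k := Nat.max i 1).
  assert (Hcount : INR (J - k) * PX s <= lsum (fun m => pind (1 <= m)%nat (pind (i <= m)%nat (pind (is_leaf stop s)
          (lsum (fun u => Gm m (s ++ u)) (words M (m - i)))))) (seq 0 (S Mb))).
  { apply lsum_count_ge; [lra|lia| |].
    - intros. repeat apply pind_nonneg. apply lsum_nonneg. intros; apply Gm_nonneg.
    - intros m Hm1 Hm2. rewrite !pind_true by (auto; lia).
      right. rewrite (P_ext M PX HX s (m - i)). apply lsum_ext. intros u Hu.
      apply words_In in Hu. unfold Gm. destruct (Rle_lt_or_eq_dec _ _ (P_nonneg M PX HX (s ++ u))) as [Hq|Hq].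
      + destruct Rle_dec as [_|Hn]; auto. exfalso. apply Hn. unfold info.
        assert (HmJ : INR m + 1 <= INR J) by (rewrite <- S_INR; apply le_INR; lia).
        assert (INR m <= g / c) by lra.
        assert (1 <= INR m) by (apply (le_INR 1); lia).
        assert (g <= log2 (/ PX (s ++ u))) by (apply log2_inv_anti; auto; apply (P_ext_le M); tauto).
        assert (c * INR m <= g). { apply (Rmult_le_compat_l c) in H; [|lra]. unfold Rdiv in H.
          rewrite <- Rmult_assoc, (Rmult_comm c g), Rmult_assoc, Rinv_r in H by lra. lra. }
        apply Rmult_le_reg_l with (INR m). lra. rewrite <- Rmult_assoc, Rinv_r by lra. lra.
      + rewrite <- Hq. destruct Rle_dec; auto. }
  specialize (Hrhs Mb).
  assert (Hk : INR J - INR k <= INR (J - k)).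
  { destruct (le_lt_dec k J). rewrite minus_INR; auto; lra. replace (J - k)%nat with 0%nat by lia.
    assert (INR J < INR k) by (apply lt_INR; auto). simpl; lra. }
  assert (Hki : INR k <= INR i + 1) by (rewrite <- S_INR; apply le_INR; lia).
  assert (HgJ : g <= c * INR J). { apply (Rmult_lt_compat_l c) in HJ1; auto. unfold Rdiv in HJ1.
    rewrite <- Rmult_assoc, (Rmult_comm c g), Rmult_assoc, Rinv_r in HJ1 by lra. lra. }
  unfold Xs. fold g.
  assert (g <= c * (INR i + 1) + c * INR (J - k)) by nra.
  apply Rmult_le_compat_l with (r := PX s) in H; [|lra].
  apply Rmult_le_compat_l with (r := c) in Hcount; [|lra]. nra.
Qed.


Lemma pind_and (A B : Prop) x : pind (A /\ B) x = pind A (pind B x).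
Proof. destruct (classic A); destruct (classic B).
  rewrite !pind_true; auto. rewrite pind_false, pind_true, pind_false; tauto.
  rewrite !pind_false; tauto. rewrite !pind_false; tauto. Qed.

Lemma entropy_leaf_bound eps1 : 0 < eps1 -> exists I,
  entropy N PY n <= lsum (fun i => lsum (fun s => pind (is_leaf stop s) (Xs s)) (words M i)) (seq 0 (S I)) + eps1.
Proof.
  intros Heps. destruct Hvalid as [Hv1 Hv2].
  set (W := fun y i => lsum (fun s => pind (is_leaf stop s /\ phi s = Some y) (PX s)) (words M i)).
  assert (HWn : forall y i, 0 <= W y i).
  { intros. apply lsum_nonneg. intros. apply pind_nonneg, (P_nonneg M); auto. }
  assert (Hterm : forall y, In y (words N n) -> exists N0, forall I, (N0 <= I)%nat ->
    (if Rlt_dec 0 (PY y) then PY y * log2 (/ PY y) else 0) <=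
    (fun I y => lsum (fun i => lsum (fun s => pind (is_leaf stop s /\ phi s = Some y) (Xs s)) (words M i)) (seq 0 (S I)) + eps1 * PY y) I y).
  { intros y Hy. cbv beta.
    assert (Hnn : forall I, 0 <= lsum (fun i => lsum (fun s => pind (is_leaf stop s /\ phi s = Some y) (Xs s)) (words M i)) (seq 0 (S I))).
    { intros. apply lsum_nonneg. intros i _. apply lsum_nonneg. intros s Hs. apply pind_nonneg, Xs_nonneg.
      apply words_In in Hs; tauto. }
    pose proof (P_nonneg N PY HY y) as HPy.
    destruct (Rlt_dec 0 (PY y)) as [Hp|Hp].
    2:{ exists 0%nat. intros. specialize (Hnn I). nra. }
    set (gy := log2 (/ PY y)).
    assert (Hgy : 0 <= gy). { apply log2_inv_nonneg; auto. apply (P_le1 N); auto. apply words_In in Hy; tauto. }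
    specialize (Hv2 y Hy). fold stop in Hv2.
    destruct (Hv2 (eps1 * PY y / (gy + 1))) as [N0 HN0].
    { unfold Rdiv. apply Rmult_lt_0_compat. nra. apply Rinv_0_lt_compat; lra. }
    exists N0. intros I HI. specialize (HN0 I HI). unfold R_dist in HN0.
    fold (W y) in HN0. rewrite <- lsum_sum_f in HN0.
    assert (Hle : lsum (W y) (seq 0 (S I)) * gy <= lsum (fun i => lsum (fun s => pind (is_leaf stop s /\ phi s = Some y) (Xs s)) (words M i)) (seq 0 (S I))).
    { rewrite Rmult_comm, <- lsum_scal. apply lsum_le. intros i Hi. unfold W. rewrite <- lsum_scal.
      apply lsum_le. intros s Hs. destruct (classic (is_leaf stop s /\ phi s = Some y)) as [HA|HA].
      - rewrite !pind_true by auto. unfold Xs.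
        destruct (Rle_lt_or_eq_dec _ _ (P_nonneg M PX HX s)) as [Hq|Hq].
        + assert (PX s <= PY y).
          { eapply Rle_trans with (W y i).
            - unfold W. rewrite <- (pind_true _ (PX s) HA). apply (lsum_elem_le (fun s => pind (is_leaf stop s /\ phi s = Some y) (PX s))); auto.
              intros; apply pind_nonneg, (P_nonneg M); auto.
            - eapply Rle_trans; [|apply (partial_le_sum (W y) (PY y) i); auto].
              destruct i. simpl; lra. rewrite tech5. pose proof (cond_pos_sum (W y) i (HWn y)). lra. }
          rewrite (Rmult_comm gy). apply Rmult_le_compat_l; [lra|]. unfold gy. apply log2_inv_anti; auto.
        + rewrite <- Hq. lra.
      - rewrite !pind_false by auto. lra. }
    apply Rabs_def2 in HN0. destruct HN0 as [HN1 HN2].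
    assert ((PY y - lsum (W y) (seq 0 (S I))) * gy <= eps1 * PY y).
    { assert (PY y - lsum (W y) (seq 0 (S I)) <= eps1 * PY y / (gy + 1)) by lra.
      apply Rle_trans with (eps1 * PY y / (gy + 1) * gy).
      apply Rmult_le_compat_r; auto. unfold Rdiv. rewrite Rmult_assoc.
      assert (/ (gy + 1) * gy <= 1). { apply Rmult_le_reg_l with (gy + 1). lra.
        rewrite <- Rmult_assoc, Rinv_r by lra. lra. }
      assert (0 <= eps1 * PY y) by nra. nra. }
    nra. }
  destruct (lsum_eventually _ _ _ Hterm) as [N0 HN0].
  exists N0. unfold entropy. eapply Rle_trans. apply (HN0 N0 (le_n _)). cbv beta.
  rewrite lsum_plus, lsum_scal, (P_total N PY HY), Rmult_1_r. apply Rplus_le_compat_r.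
  rewrite lsum_swap. apply lsum_le. intros i Hi. rewrite lsum_swap. apply lsum_le. intros s Hs.
  apply words_In in Hs.
  rewrite (lsum_ext _ (fun y => pind (is_leaf stop s) (pind (phi s = Some y) (Xs s)))) by (intros; apply pind_and).
  rewrite <- pind_lsum. apply pind_le_le. apply lsum_nonneg. intros. apply pind_nonneg, Xs_nonneg; tauto.
  apply NoDup_pind_some. apply words_NoDup. apply Xs_nonneg; tauto.
Qed.

End Part2.


Lemma le_eps (a b : R) : (forall eps, 0 < eps -> a <= b + eps) -> a <= b.
Proof. intros H. apply Rnot_lt_le. intros Hlt. specialize (H ((a - b)/2) ltac:(lra)). lra. Qed.

Lemma entropy_bound M N PX PY phi n e c C0 :
  process M PX -> process N PY -> valid_alg M N PX PY n phi ->
  expected_time M PX (halts phi) e -> 0 < c ->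
  (forall Mb, lsum (fun m => pind (1 <= m)%nat (Pr_ge M PX m c)) (seq 0 (S Mb)) <= C0) ->
  entropy N PY n <= c * (e + 1 + C0).
Proof.
  intros HX HY Hv He Hc HC0. apply le_eps. intros eps1 Heps.
  destruct (entropy_leaf_bound M N PX PY HX HY phi n Hv eps1 Heps) as [I HI].
  set (T := fun Mb i s => lsum (fun m => pind (1 <= m)%nat (pind (i <= m)%nat (pind (is_leaf (halts phi) s)
          (lsum (fun u => Gm PX c m (s ++ u)) (words M (m - i)))))) (seq 0 (S Mb))).
  destruct (lsum_eventually (fun i => lsum (fun s => pind (is_leaf (halts phi) s) (Xs PX s)) (words M i))
     (fun Mb i => lsum (fun s => c * (INR i + 1) * pind (is_leaf (halts phi) s) (PX s) + c * T Mb i s) (words M i))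
     (seq 0 (S I))) as [Nb HNb].
  { intros i _. apply lsum_eventually. intros s Hs. apply (leaf_bound M PX HX phi c Hc i s Hs). }
  specialize (HNb Nb (le_n _)).
  eapply Rle_trans. apply HI. apply Rplus_le_compat_r. eapply Rle_trans. apply HNb.
  rewrite (lsum_ext _ (fun i => c * (INR i + 1) * leafmass M PX (halts phi) i + c * lsum (T Nb i) (words M i))).
  2:{ intros i _. rewrite lsum_plus, lsum_scal, lsum_scal. unfold leafmass. reflexivity. }
  rewrite lsum_plus, lsum_scal.
  rewrite (lsum_ext _ (fun i => c * ((INR i + 1) * leafmass M PX (halts phi) i))) by (intros; ring).
  rewrite lsum_scal.
  assert (B1 : lsum (fun i => (INR i + 1) * leafmass M PX (halts phi) i) (seq 0 (S I)) <= e + 1).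
  { destruct He as [He1 He2].
    rewrite (lsum_ext _ (fun i => INR i * leafmass M PX (halts phi) i + leafmass M PX (halts phi) i)) by (intros; ring).
    rewrite lsum_plus, !lsum_sum_f.
    pose proof (partial_le_sum _ _ I (fun i => Rmult_le_pos _ _ (pos_INR i) (leafmass_nonneg M PX HX _ i)) He2).
    pose proof (partial_le_sum _ _ I (leafmass_nonneg M PX HX _) He1). lra. }
  assert (B2 : lsum (fun i => lsum (T Nb i) (words M i)) (seq 0 (S I)) <= C0).
  { eapply Rle_trans; [|apply (HC0 Nb)]. unfold T.
    rewrite (lsum_ext _ (fun i => lsum (fun m => lsum (fun s => pind (1 <= m)%nat (pind (i <= m)%nat (pind (is_leaf (halts phi) s)
          (lsum (fun u => Gm PX c m (s ++ u)) (words M (m - i)))))) (words M i)) (seq 0 (S Nb)))).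
    2:{ intros. apply lsum_swap. }
    rewrite lsum_swap. apply lsum_le. intros m _.
    rewrite (lsum_ext _ (fun i => pind (1 <= m)%nat (pind (i <= m)%nat (lsum (fun s => pind (is_leaf (halts phi) s)
          (lsum (fun u => Gm PX c m (s ++ u)) (words M (m - i)))) (words M i))))).
    2:{ intros. rewrite !pind_lsum. reflexivity. }
    rewrite <- pind_lsum. apply pind_le_le.
    { apply lsum_nonneg. intros. apply pind_nonneg, lsum_nonneg. intros. apply pind_nonneg, lsum_nonneg.
      intros. apply (Gm_nonneg M PX HX). }
    eapply Rle_trans. apply lsum_restrict.
    { intros. apply lsum_nonneg. intros. apply pind_nonneg, lsum_nonneg. intros. apply (Gm_nonneg M PX HX). }
    apply leaf_sum_level_le. intros; apply (Gm_nonneg M PX HX). }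
  nra.
Qed.


Lemma info_nonneg M P n s : process M P -> Forall (fun k => (k < M)%nat) s -> 0 < P s -> 0 <= info P n s.
Proof. intros HP Hs Hp. unfold info. apply Rmult_le_pos.
  destruct n. simpl. rewrite Rinv_0. lra. left. apply Rinv_0_lt_compat, lt_0_INR; lia.
  apply log2_inv_nonneg; auto. apply (P_le1 M); auto. Qed.

Lemma Pr_ge_nonpos M P n lam : process M P -> lam <= 0 -> Pr_ge M P n lam = 1.
Proof. intros HP Hl. unfold Pr_ge. rewrite <- (P_total M P HP n). apply lsum_ext. intros s Hs.
  apply words_In in Hs. destruct (Rle_lt_or_eq_dec _ _ (P_nonneg M P HP s)) as [Hq|Hq].
  - destruct Rle_dec as [_|Hn]; auto. exfalso. apply Hn. pose proof (info_nonneg M P n s HP (proj2 Hs) Hq). lra.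
  - rewrite <- Hq. destruct Rle_dec; auto. Qed.

Lemma Pr_ge_le1 M P n lam : process M P -> Pr_ge M P n lam <= 1.
Proof. intros HP. unfold Pr_ge. rewrite <- (P_total M P HP n). apply lsum_le. intros s _.
  destruct Rle_dec. lra. apply (P_nonneg M); auto. Qed.

Lemma Pr_ge_nonneg M P n lam : process M P -> 0 <= Pr_ge M P n lam.
Proof. intros HP. apply lsum_nonneg. intros. destruct Rle_dec. apply (P_nonneg M); auto. lra. Qed.

Lemma sum_lim_nonneg (u : nat -> R) l : (forall i, 0 <= u i) -> infinite_sum u l -> 0 <= l.
Proof. intros H Hs. apply Rnot_lt_le. intros Hl. destruct (Hs (- l)) as [N0 HN0]. lra.
  specialize (HN0 N0 (le_n _)). unfold R_dist in HN0. pose proof (cond_pos_sum u N0 H).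
  rewrite Rabs_right in HN0 by lra. lra. Qed.

Lemma part2 M N PX PY hu HY :
  process M PX -> process N PY -> is_Hupper M PX hu ->
  is_limsup (fun n => entropy N PY n / INR n) HY ->
  upper_tail M PX hu -> forall L, achievable M N PX PY L -> HY <= L * hu.
Proof.
  intros HX HYp Hhu Hlim Htail L [phi [Hvalid Hrate]].
  assert (Hhu0 : 0 <= hu).
  { destruct Hhu as [_ H2]. apply H2. intros y Hy. apply Rnot_lt_le. intros Hlt.
    destruct (Hy (1/2)) as [N0 HN0]. lra. specialize (HN0 N0 (le_n _)).
    rewrite Pr_ge_nonpos in HN0 by (auto; lra). unfold R_dist in HN0. rewrite Rabs_right in HN0; lra. }
  assert (Hmain : forall d eps, 0 < d -> 0 < eps -> HY <= (hu + d) * (L + eps)).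
  { intros d eps Hd Heps. set (c := hu + d).
    destruct (Htail d Hd) as [K [m0 HK]].
    set (m1 := Nat.max m0 1). set (C0 := INR m1 + 2 * Rabs K).
    assert (HC0 : forall Mb, lsum (fun m => pind (1 <= m)%nat (Pr_ge M PX m c)) (seq 0 (S Mb)) <= C0).
    { intros Mb. eapply Rle_trans with (lsum (fun m => pind (m < m1)%nat 1 + Rabs K * pind (1 <= m)%nat (/ (INR m ^ 2))) (seq 0 (S Mb))).
      - apply lsum_le. intros m _. destruct (le_lt_dec m1 m).
        + rewrite (pind_false (m < m1)%nat) by lia. rewrite !(pind_true (1 <= m)%nat) by lia. specialize (HK m ltac:(lia) ltac:(lia)).
          unfold c. eapply Rle_trans. apply HK. unfold Rdiv. rewrite Rplus_0_l.
          apply Rmult_le_compat_r. left. apply Rinv_0_lt_compat. apply pow_lt. apply lt_0_INR; lia.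
          apply Rle_abs.
        + rewrite (pind_true (m < m1)%nat) by lia. assert (0 <= Rabs K * pind (1 <= m)%nat (/ (INR m ^ 2))).
          { apply Rmult_le_pos. apply Rabs_pos. apply pind_nonneg. destruct m. simpl; rewrite Rmult_0_l, Rinv_0; lra.
            left. apply Rinv_0_lt_compat, pow_lt, lt_0_INR; lia. }
          eapply Rle_trans. apply pind_le. apply Pr_ge_nonneg; auto. pose proof (Pr_ge_le1 M PX m c HX). lra.
      - rewrite lsum_plus, lsum_scal. pose proof (lsum_count_lt m1 (S Mb)). pose proof (sum_inv_sq (S Mb)).
        pose proof (Rabs_pos K). unfold C0. nra. }
    assert (Hc : 0 < c) by (unfold c; lra).
    destruct (Hrate eps Heps) as [n0 Hn0].
    assert (Hbound : forall n, (n0 <= n)%nat -> (1 <= n)%nat -> entropy N PY n / INR n <= c * (L + eps) + c * (1 + C0) / INR n).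
    { intros n H1 H2. destruct (Hn0 n H1) as [e [He Hen]].
      pose proof (entropy_bound M N PX PY (phi n) n e c C0 HX HYp (Hvalid n) He Hc HC0).
      assert (0 < INR n) by (apply lt_0_INR; lia).
      unfold Rdiv in *. apply Rmult_le_compat_r with (r := / INR n) in H; [|left; apply Rinv_0_lt_compat; auto].
      assert (c * (e + 1 + C0) * / INR n = c * (e * / INR n) + c * (1 + C0) * / INR n) by (field; lra).
      rewrite H3 in H. apply Rmult_le_compat_l with (r := c) in Hen; lra. }
    apply le_eps. intros eps3 Heps3. set (eps2 := eps3 / 2). assert (Heps2 : 0 < eps2) by (unfold eps2; lra).
    destruct (INR_unbounded (c * (1 + C0) / eps2)) as [N1 HN1].
    destruct (Hlim eps2 Heps2) as [_ Hinf]. destruct (Hinf (Nat.max (Nat.max n0 1) N1)) as [n [Hn Hge]].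
    specialize (Hbound n ltac:(lia) ltac:(lia)).
    assert (0 < INR n) by (apply lt_0_INR; lia).
    assert (INR N1 <= INR n) by (apply le_INR; lia).
    assert (c * (1 + C0) / INR n <= eps2).
    { assert (0 <= C0) by (unfold C0; pose proof (pos_INR m1); pose proof (Rabs_pos K); lra).
      unfold Rdiv. apply Rmult_le_reg_r with (INR n); auto. rewrite Rmult_assoc, Rinv_l by lra.
      unfold Rdiv in HN1. apply Rmult_lt_compat_r with (r := eps2) in HN1; auto.
      rewrite Rmult_assoc, Rinv_l, Rmult_1_r in HN1 by lra. nra. }
    unfold eps2 in *. lra. }
  assert (HL : 0 <= L).
  { apply le_eps. intros eps Heps. destruct (Hrate eps Heps) as [n0 Hn0].
    destruct (Hn0 (S n0) ltac:(lia)) as [e [He Hen]].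
    assert (0 <= e) by (apply (sum_lim_nonneg _ _ (fun i => Rmult_le_pos _ _ (pos_INR i) (leafmass_nonneg M PX HX _ i)) (proj2 He))).
    assert (0 < INR (S n0)) by (apply lt_0_INR; lia).
    assert (0 <= e / INR (S n0)) by (unfold Rdiv; apply Rmult_le_pos; auto; left; apply Rinv_0_lt_compat; auto). lra. }
  apply le_eps. intros x Hx.
  set (t := Rmin 1 (x / (hu + L + 1))).
  assert (Ht : 0 < t) by (unfold t; apply Rmin_pos; [lra|]; unfold Rdiv; apply Rmult_lt_0_compat; [lra|apply Rinv_0_lt_compat; lra]).
  assert (Ht1 : t <= 1) by apply Rmin_l.
  assert (Ht2 : t * (hu + L + 1) <= x).
  { unfold t. apply Rle_trans with (x / (hu + L + 1) * (hu + L + 1)). apply Rmult_le_compat_r. lra. apply Rmin_r.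
    right. field. lra. }
  specialize (Hmain t t Ht Ht). nra.
Qed.


Definition Lo P s := fst (ival P s).
Definition Hi P s := snd (ival P s).
Definition cc (P : list nat -> R) s k := P (s ++ [k]) / P s.

Lemma ival_aux_snoc P pre lo hi s x :
  ival_aux P pre lo hi (s ++ [x]) =
  (fst (ival_aux P pre lo hi s) + (snd (ival_aux P pre lo hi s) - fst (ival_aux P pre lo hi s)) * lsum (cc P (pre ++ s)) (seq 0 x),
   fst (ival_aux P pre lo hi s) + (snd (ival_aux P pre lo hi s) - fst (ival_aux P pre lo hi s)) * lsum (cc P (pre ++ s)) (seq 0 (S x))).
Proof.
  revert pre lo hi. induction s; intros pre lo hi.
  - simpl. rewrite app_nil_r. reflexivity.
  - simpl. rewrite IHs. rewrite <- app_assoc. reflexivity.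
Qed.

Lemma Lo_snoc P s x : Lo P (s ++ [x]) = Lo P s + (Hi P s - Lo P s) * lsum (cc P s) (seq 0 x).
Proof. unfold Lo, Hi, ival. rewrite ival_aux_snoc. reflexivity. Qed.
Lemma Hi_snoc P s x : Hi P (s ++ [x]) = Lo P s + (Hi P s - Lo P s) * lsum (cc P s) (seq 0 (S x)).
Proof. unfold Lo, Hi, ival. rewrite ival_aux_snoc. reflexivity. Qed.
Lemma Lo_nil P : Lo P [] = 0. Proof. reflexivity. Qed.
Lemma Hi_nil P : Hi P [] = 1. Proof. reflexivity. Qed.

Definition ilen (a b u v : R) := Rmax 0 (Rmin b v - Rmax a u).

Lemma ilen_split a b c u v : a <= b -> b <= c -> ilen a c u v = ilen a b u v + ilen b c u v.
Proof. intros. unfold ilen, Rmax, Rmin. repeat destruct Rle_dec; lra. Qed.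
Lemma ilen_sym a b u v : ilen a b u v = ilen u v a b.
Proof. unfold ilen, Rmax, Rmin. repeat destruct Rle_dec; lra. Qed.
Lemma ilen_nonneg a b u v : 0 <= ilen a b u v.
Proof. unfold ilen. apply Rmax_l. Qed.
Lemma ilen_le_len a b u v : u <= v -> ilen a b u v <= v - u.
Proof. intros. unfold ilen, Rmax, Rmin. repeat destruct Rle_dec; lra. Qed.
Lemma ilen_inside a b u v : u <= a -> a <= b -> b <= v -> ilen a b u v = b - a.
Proof. intros. unfold ilen, Rmax, Rmin. repeat destruct Rle_dec; lra. Qed.

Lemma ilen_telescope (b : nat -> R) K u v : (forall k, (k < K)%nat -> b k <= b (S k)) ->
  lsum (fun k => ilen (b k) (b (S k)) u v) (seq 0 K) = ilen (b 0%nat) (b K) u v.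
Proof.
  intros Hb. induction K.
  - unfold lsum; simpl. unfold ilen, Rmax, Rmin. repeat destruct Rle_dec; lra.
  - rewrite lsum_seq_S, IHK by (intros; apply Hb; lia). simpl (0 + K)%nat.
    assert (Hm : forall k, (k <= K)%nat -> b 0%nat <= b k).
    { induction k; intros Hk. lra. pose proof (Hb k ltac:(lia)). specialize (IHk ltac:(lia)). lra. }
    rewrite <- ilen_split. reflexivity. apply Hm; lia. apply Hb; lia.
Qed.

Section Intv.
Variable M : nat.
Variable P : list nat -> R.
Hypothesis HP : process M P.

Lemma cc_nonneg s k : 0 <= cc P s k.
Proof. unfold cc, Rdiv. apply Rmult_le_pos. apply (P_nonneg M); auto.
  destruct (Rle_lt_or_eq_dec _ _ (P_nonneg M P HP s)). left; apply Rinv_0_lt_compat; auto.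
  rewrite <- e, Rinv_0. lra. Qed.

Lemma cc_total s : 0 < P s -> lsum (cc P s) (seq 0 M) = 1.
Proof. intros H. unfold cc, Rdiv. rewrite (lsum_ext _ (fun k => / P s * P (s ++ [k]))) by (intros; ring).
  rewrite lsum_scal, <- (proj2 (proj2 HP) s). field. lra. Qed.

Lemma ival_props s : Forall (fun k => (k < M)%nat) s ->
  Hi P s - Lo P s = P s /\ 0 <= Lo P s /\ Hi P s <= 1.
Proof.
  induction s using rev_ind; intros Hs.
  - rewrite Lo_nil, Hi_nil, (proj1 (proj2 HP)). lra.
  - apply Forall_app in Hs. destruct Hs as [H1 H2]. inversion H2; subst.
    destruct (IHs H1) as [Hw [Hl Hh]]. rewrite Lo_snoc, Hi_snoc, Hw.
    rewrite lsum_seq_S. simpl (0 + x)%nat.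
    pose proof (lsum_nonneg (cc P s) (seq 0 x) (fun k _ => cc_nonneg s k)) as Hc0.
    destruct (Rle_lt_or_eq_dec _ _ (P_nonneg M P HP s)) as [Hp|Hp].
    + assert (lsum (cc P s) (seq 0 (S x)) <= 1).
      { rewrite <- (cc_total s Hp). apply lsum_mono_seq. lia. apply cc_nonneg. }
      rewrite lsum_seq_S in H. simpl (0+x)%nat in H.
      unfold cc at 2. split. field. lra. split. nra. nra.
    + rewrite <- Hp. assert (P (s ++ [x]) = 0).
      { pose proof (P_child_le M P HP s x H3). pose proof (P_nonneg M P HP (s ++ [x])). lra. }
      rewrite H. lra.
Qed.

Lemma children_tile s u v : Forall (fun k => (k < M)%nat) s ->
  lsum (fun k => ilen (Lo P (s ++ [k])) (Hi P (s ++ [k])) u v) (seq 0 M) = ilen (Lo P s) (Hi P s) u v.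
Proof.
  intros Hs. destruct (ival_props s Hs) as [Hw _].
  set (b := fun k => Lo P s + (Hi P s - Lo P s) * lsum (cc P s) (seq 0 k)).
  rewrite (lsum_ext _ (fun k => ilen (b k) (b (S k)) u v)).
  2:{ intros k _. unfold b. rewrite Lo_snoc, Hi_snoc. reflexivity. }
  rewrite ilen_telescope.
  - unfold b. replace (lsum (cc P s) (seq 0 0)) with 0 by reflexivity. rewrite Rmult_0_r, Rplus_0_r. f_equal.
    destruct (Rle_lt_or_eq_dec _ _ (P_nonneg M P HP s)) as [Hp|Hp].
    + rewrite cc_total by auto. ring.
    + rewrite Hw, <- Hp. assert (Hi P s = Lo P s) by lra. rewrite H. ring.
  - intros k _. unfold b. rewrite lsum_seq_S, Hw. pose proof (cc_nonneg s (0 + k)). pose proof (P_nonneg M P HP s). nra.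
Qed.

Lemma level_tile m u v :
  lsum (fun t => ilen (Lo P t) (Hi P t) u v) (words M m) = ilen 0 1 u v.
Proof.
  induction m.
  - unfold lsum; simpl. rewrite Lo_nil, Hi_nil. lra.
  - rewrite lsum_words_S. rewrite <- IHm. apply lsum_ext. intros t Ht. apply words_In in Ht.
    apply children_tile. tauto.
Qed.

Lemma ilen_self s : Forall (fun k => (k < M)%nat) s -> ilen (Lo P s) (Hi P s) 0 1 = P s.
Proof. intros Hs. destruct (ival_props s Hs) as [Hw [Hl Hh]]. pose proof (P_nonneg M P HP s). rewrite ilen_inside; lra. Qed.

End Intv.


Lemma straddle a b c d r : a <= b -> b - a <= r -> c <= d -> ~ (c <= a /\ b <= d) ->
  ilen a b c d <= ilen a b c (c + r) + ilen a b (d - r) d.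
Proof. intros. unfold ilen, Rmax, Rmin. repeat destruct Rle_dec; lra. Qed.

Lemma isub_of a b c d : c <= a -> b <= d -> isub (a, b) (c, d).
Proof. intros H1 H2 x Hx. simpl in *. lra. Qed.

Section Lvl.
Variables (M N : nat) (PX PY : list nat -> R).
Hypothesis HX : process M PX.
Hypothesis HY : process N PY.
Variables (n : nat) (r : R).
Hypothesis Hr : 0 < r.

Let stop := int_stop N PX PY n.

Lemma notstop_bound m :
  lsum (fun t => pind (~ stop t) (PX t)) (words M m) <=
  lsum (fun t => pind (r < PX t) (PX t)) (words M m) + lsum (fun y => Rmin (PY y) (2 * r)) (words N n).
Proof.
  set (A := fun y t => pind (~ stop t /\ PX t <= r) (ilen (Lo PX t) (Hi PX t) (Lo PY y) (Hi PY y))).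
  assert (Hsplit : lsum (fun t => pind (~ stop t) (PX t)) (words M m) <=
     lsum (fun t => pind (r < PX t) (PX t)) (words M m) + lsum (fun t => lsum (fun y => A y t) (words N n)) (words M m)).
  { rewrite <- lsum_plus. apply lsum_le. intros t Ht. apply words_In in Ht.
    assert (Ht2 : lsum (fun y => A y t) (words N n) = pind (~ stop t /\ PX t <= r) (PX t)).
    { unfold A. rewrite <- pind_lsum. f_equal.
      rewrite (lsum_ext _ (fun y => ilen (Lo PY y) (Hi PY y) (Lo PX t) (Hi PX t))) by (intros; apply ilen_sym).
      rewrite (level_tile N PY HY). rewrite ilen_sym. apply (ilen_self M); tauto. }
    rewrite Ht2. pose proof (P_nonneg M PX HX t).
    destruct (classic (stop t)). rewrite (pind_false (~ stop t)) by tauto.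
    pose proof (pind_nonneg (r < PX t) _ H). pose proof (pind_nonneg (~ stop t /\ PX t <= r) _ H). lra.
    rewrite (pind_true (~ stop t)) by auto. destruct (Rlt_le_dec r (PX t)).
    rewrite pind_true by auto. pose proof (pind_nonneg (~ stop t /\ PX t <= r) _ H). lra.
    rewrite (pind_false (r < PX t)) by lra. rewrite pind_true by tauto. lra. }
  eapply Rle_trans. apply Hsplit. apply Rplus_le_compat_l. rewrite lsum_swap. apply lsum_le.
  intros y Hy. apply words_In in Hy. destruct (ival_props N PY HY y (proj2 Hy)) as [HwY [HlY HhY]].
  pose proof (P_nonneg N PY HY y).
  apply Rmin_glb.
  - rewrite <- (ilen_self N PY HY y (proj2 Hy)). rewrite ilen_sym, <- (level_tile M PX HX m). apply lsum_le. intros t _.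
    unfold A. apply pind_le. apply ilen_nonneg.
  - apply Rle_trans with (lsum (fun t => ilen (Lo PX t) (Hi PX t) (Lo PY y) (Lo PY y + r) + ilen (Lo PX t) (Hi PX t) (Hi PY y - r) (Hi PY y)) (words M m)).
    + apply lsum_le. intros t Ht. apply words_In in Ht. destruct (ival_props M PX HX t (proj2 Ht)) as [Hw [Hl Hh]].
      unfold A. destruct (classic (~ stop t /\ PX t <= r)) as [HA|HA].
      * rewrite pind_true by auto. apply straddle; try lra. pose proof (P_nonneg M PX HX t). lra.
        intros [H1 H2]. apply (proj1 HA). exists y. split. apply words_In; auto.
        apply isub_of; auto.
      * rewrite pind_false by auto. pose proof (ilen_nonneg (Lo PX t) (Hi PX t) (Lo PY y) (Lo PY y + r)).
        pose proof (ilen_nonneg (Lo PX t) (Hi PX t) (Hi PY y - r) (Hi PY y)). lra.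
    + rewrite lsum_plus, !(level_tile M PX HX). pose proof (ilen_le_len 0 1 (Lo PY y) (Lo PY y + r)).
      pose proof (ilen_le_len 0 1 (Hi PY y - r) (Hi PY y)). lra.
Qed.

End Lvl.


Lemma geo_sum (J : nat) (x : R) m : 0 < x < 1 ->
  lsum (fun j => pind (J <= j)%nat (x ^ j)) (seq 0 m) <= x ^ J / (1 - x).
Proof.
  intros Hx. assert (forall m, lsum (fun j => pind (J <= j)%nat (x ^ j)) (seq 0 m) <= (x ^ J - x ^ (Nat.max m J)) / (1 - x)).
  { induction m0.
    - simpl. unfold lsum; simpl. unfold Rdiv. rewrite Rminus_diag, Rmult_0_l. lra.
    - rewrite lsum_seq_S. simpl (0 + m0)%nat. destruct (le_lt_dec J m0).
      + rewrite pind_true by auto. rewrite (Nat.max_l (S m0) J) by lia. rewrite (Nat.max_l m0 J) in IHm0 by lia.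
        apply Rle_trans with ((x ^ J - x ^ m0) / (1 - x) + x ^ m0). lra.
        right. simpl. field. lra.
      + rewrite pind_false by lia. rewrite (Nat.max_r (S m0) J) by lia. rewrite (Nat.max_r m0 J) in IHm0 by lia. lra. }
  eapply Rle_trans. apply H. unfold Rdiv. apply Rmult_le_compat_r. left; apply Rinv_0_lt_compat; lra.
  pose proof (pow_le x (Nat.max m J) ltac:(lra)). lra.
Qed.

Definition xa (a : R) := exp (- (a * ln 2)).

Lemma xa_bounds a : 0 < a -> 0 < xa a < 1.
Proof. intros. unfold xa. split. apply exp_pos. rewrite <- exp_0. apply exp_increasing.
  pose proof ln2_pos. nra. Qed.

Lemma ln_xa_pow a j : ln (xa a ^ j) = - (INR j * a * ln 2).
Proof. unfold xa. rewrite ln_pow by apply exp_pos. rewrite ln_exp. ring. Qed.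

Definition ent1 (p : R) := if Rlt_dec 0 p then p * log2 (/ p) else 0.

Lemma min_sum p a m : 0 < a -> 0 <= p <= 1 ->
  lsum (fun j => Rmin p (2 * xa a ^ j)) (seq 0 m) <= ent1 p / a + p * (/ a + 1 + / (1 - xa a)).
Proof.
  intros Ha Hp. pose proof (xa_bounds a Ha) as Hx. set (x := xa a) in *.
  unfold ent1. destruct (Rlt_dec 0 p) as [Hp0|Hp0].
  2:{ assert (p = 0) by lra. subst. rewrite (lsum_ext _ (fun _ => 0)). rewrite lsum_zero. unfold Rdiv. lra.
      intros j _. apply Rmin_left. pose proof (pow_lt x j ltac:(lra)). lra. }
  set (g := log2 (/ p)). assert (Hg : 0 <= g) by (apply log2_inv_nonneg; lra).
  destruct (ceil_nat ((1 + g) / a)) as [J [HJ1 HJ2]].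
  { unfold Rdiv. apply Rmult_le_pos. lra. left; apply Rinv_0_lt_compat; lra. }
  assert (HxJ : x ^ J <= p / 2).
  { pose proof (pow_lt x J ltac:(lra)).
    assert (ln (x ^ J) <= ln (p / 2)).
    { unfold x. rewrite ln_xa_pow. unfold Rdiv. rewrite ln_mult, ln_Rinv by lra.
      unfold g, log2 in HJ1. rewrite ln_Rinv in HJ1 by lra. pose proof ln2_pos.
      assert ((1 + - ln p / ln 2) < INR J * a).
      { apply Rmult_lt_compat_r with (r := a) in HJ1; auto. unfold Rdiv in HJ1.
        rewrite Rmult_assoc, Rinv_l, Rmult_1_r in HJ1 by lra. lra. }
      assert (ln 2 - ln p < INR J * a * ln 2).
      { apply Rmult_lt_compat_r with (r := ln 2) in H1; auto. unfold Rdiv in H1.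
        replace ((1 + - ln p * / ln 2) * ln 2) with (ln 2 - ln p) in H1 by (field; lra). lra. }
      lra. }
    destruct (Rle_lt_dec (x ^ J) (p / 2)); auto. exfalso.
    assert (ln (p / 2) < ln (x ^ J)) by (apply ln_increasing; lra). lra. }
  apply Rle_trans with (lsum (fun j => p * pind (j < J)%nat 1 + 2 * pind (J <= j)%nat (x ^ j)) (seq 0 m)).
  { apply lsum_le. intros j _. destruct (le_lt_dec J j).
    - rewrite (pind_false (j < J)%nat) by lia. rewrite pind_true by auto. rewrite Rmult_0_r, Rplus_0_l. apply Rmin_r.
    - rewrite pind_true by auto. rewrite (pind_false (J <= j)%nat) by lia. rewrite Rmult_0_r, Rplus_0_r, Rmult_1_r. apply Rmin_l. }
  rewrite lsum_plus, !lsum_scal. pose proof (lsum_count_lt J m). pose proof (geo_sum J x m Hx).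
  assert (p * lsum (fun j => pind (j < J)%nat 1) (seq 0 m) <= p * INR J) by (apply Rmult_le_compat_l; lra).
  assert (2 * lsum (fun j => pind (J <= j)%nat (x ^ j)) (seq 0 m) <= p / (1 - x)).
  { eapply Rle_trans. apply Rmult_le_compat_l. lra. apply H0. unfold Rdiv.
    rewrite <- Rmult_assoc. apply Rmult_le_compat_r. left; apply Rinv_0_lt_compat; lra. lra. }
  assert (p * INR J <= p * ((1 + g) / a + 1)) by (apply Rmult_le_compat_l; lra).
  assert (p * ((1 + g) / a + 1) + p / (1 - x) = p * g / a + p * (/ a + 1 + / (1 - x))) by (field; lra).
  lra.
Qed.

Lemma entropy_nonneg N PY n : process N PY -> 0 <= entropy N PY n.
Proof. intros HY. apply lsum_nonneg. intros y Hy. apply words_In in Hy. destruct Rlt_dec; [|lra].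
  apply Rmult_le_pos; [lra|]. apply log2_inv_nonneg; auto. apply (P_le1 N); tauto. Qed.

Lemma Pr_le_nonneg M P n lam : process M P -> 0 <= Pr_le M P n lam.
Proof. intros HP. apply lsum_nonneg. intros. destruct Rle_dec. apply (P_nonneg M); auto. lra. Qed.

Lemma big_mass_le M P j a : process M P -> 0 < a -> (1 <= j)%nat ->
  lsum (fun t => pind (xa a ^ j < P t) (P t)) (words M j) <= Pr_le M P j a.
Proof.
  intros HP Ha Hj. apply lsum_le. intros t _. destruct (classic (xa a ^ j < P t)) as [H|H].
  - rewrite pind_true by auto. destruct Rle_dec as [_|Hn]. lra. exfalso. apply Hn. unfold info, log2.
    pose proof ln2_pos. pose proof (pow_lt (xa a) j (proj1 (xa_bounds a Ha))).
    assert (ln (xa a ^ j) < ln (P t)) by (apply ln_increasing; auto).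
    rewrite ln_xa_pow in H2. rewrite ln_Rinv by lra.
    assert (0 < INR j) by (apply lt_0_INR; lia).
    assert (- ln (P t) / ln 2 < INR j * a).
    { apply Rmult_lt_reg_r with (ln 2); auto. unfold Rdiv. rewrite Rmult_assoc, Rinv_l by lra. lra. }
    apply Rmult_le_reg_l with (INR j); auto. rewrite <- Rmult_assoc, Rinv_r by lra. lra.
  - rewrite pind_false by auto. destruct Rle_dec. apply (P_nonneg M); auto. lra.
Qed.


Lemma part1 M N PX PY hl HY :
  process M PX -> process N PY ->
  is_limsup (fun n => entropy N PY n / INR n) HY ->
  lower_tail M PX hl -> 0 < hl ->
  forall eps, 0 < eps -> int_achievable M N PX PY (HY / hl + eps).
Proof.
  intros HX HYp Hlim Htail Hhl eps Heps.
  assert (Hu : forall n, 0 <= entropy N PY n / INR n).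
  { intros n. unfold Rdiv. apply Rmult_le_pos. apply entropy_nonneg; auto.
    destruct n. simpl. rewrite Rinv_0. lra. left. apply Rinv_0_lt_compat, lt_0_INR; lia. }
  assert (HY0 : 0 <= HY).
  { apply le_eps. intros e1 He1. destruct (Hlim e1 He1) as [[N0 HN0] _]. specialize (HN0 N0 (le_n _)).
    specialize (Hu N0). lra. }
  set (d := Rmin (hl / 2) (eps * hl ^ 2 / (4 * (HY + 1)))).
  assert (Hd : 0 < d).
  { unfold d. apply Rmin_pos. lra. unfold Rdiv. apply Rmult_lt_0_compat. apply Rmult_lt_0_compat; auto. apply pow_lt; auto.
    apply Rinv_0_lt_compat; lra. }
  assert (Hd1 : d <= hl / 2) by apply Rmin_l.
  assert (Hd2 : d <= eps * hl ^ 2 / (4 * (HY + 1))) by apply Rmin_r.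
  set (a := hl - d).
  assert (Ha : hl / 2 <= a) by (unfold a; lra).
  assert (Ha0 : 0 < a) by lra.
  assert (HYa : HY / a <= HY / hl + eps / 2).
  { assert (E: HY / a - HY / hl = HY * d / (a * hl)) by (unfold a; field; lra).
    assert (HY * d / (a * hl) <= eps / 2).
    { apply Rle_trans with (HY * (eps * hl ^ 2 / (4 * (HY + 1))) / (a * hl)).
      unfold Rdiv. apply Rmult_le_compat_r. left; apply Rinv_0_lt_compat; nra. apply Rmult_le_compat_l; auto.
      unfold Rdiv. apply Rmult_le_reg_r with (a * hl). nra.
      rewrite Rmult_assoc, Rinv_l, Rmult_1_r by nra.
      apply Rle_trans with (HY * (eps * hl ^ 2 * / (4 * (HY + 1)))). right; ring.
      assert (HY * / (HY + 1) <= 1). { apply Rmult_le_reg_r with (HY + 1). lra. rewrite Rmult_assoc, Rinv_l by lra. lra. }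
      assert (HY * (eps * hl ^ 2 * / (4 * (HY + 1))) = (HY * / (HY + 1)) * (eps * hl ^ 2 / 4)) by (field; lra).
      rewrite H0. assert (eps * hl ^ 2 / 4 <= eps / 2 * (a * hl)). { simpl. assert (0 <= (a - hl/2) * (hl * eps)) by (apply Rmult_le_pos; nra). nra. }
      assert (0 <= eps * hl ^ 2 / 4) by (simpl; unfold Rdiv; apply Rmult_le_pos; [nra|lra]).
      assert (0 <= HY * / (HY + 1)) by (apply Rmult_le_pos; auto; left; apply Rinv_0_lt_compat; lra). nra. }
    lra. }
  destruct (Htail d Hd) as [K [m0 HK]].
  set (m1 := Nat.max m0 1). set (x := xa a). pose proof (xa_bounds a Ha0) as Hx. fold x in Hx.
  set (C1 := / a + 1 + / (1 - x)). set (C2 := INR m1 + 2 * Rabs K + C1).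
  assert (HC1 : 0 <= C1). { unfold C1. assert (0 < / a) by (apply Rinv_0_lt_compat; lra).
    assert (0 < / (1 - x)) by (apply Rinv_0_lt_compat; lra). lra. }
  assert (HC2 : 0 <= C2) by (unfold C2; pose proof (pos_INR m1); pose proof (Rabs_pos K); lra).
  assert (HB : forall n m, lsum (alive M PX (int_stop N PX PY n)) (seq 0 (S m)) <= C2 + entropy N PY n / a).
  { intros n m.
    apply Rle_trans with (lsum (fun j => pind (j < m1)%nat 1 + Rabs K * pind (1 <= j)%nat (/ (INR j ^ 2)) +
        lsum (fun y => Rmin (PY y) (2 * x ^ j)) (words N n)) (seq 0 (S m))).
    - apply lsum_le. intros j _.
      assert (Hy0 : 0 <= lsum (fun y => Rmin (PY y) (2 * x ^ j)) (words N n)).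
      { apply lsum_nonneg. intros. apply Rmin_glb. apply (P_nonneg N); auto. pose proof (pow_lt x j ltac:(lra)). lra. }
      assert (Hk0 : 0 <= Rabs K * pind (1 <= j)%nat (/ (INR j ^ 2))).
      { apply Rmult_le_pos. apply Rabs_pos. apply pind_nonneg. destruct j. simpl; rewrite Rmult_0_l, Rinv_0; lra.
        left. apply Rinv_0_lt_compat, pow_lt, lt_0_INR; lia. }
      destruct (le_lt_dec m1 j).
      + rewrite (pind_false (j < m1)%nat) by lia. rewrite (pind_true (1 <= j)%nat) by lia.
        eapply Rle_trans. apply (alive_le_notstop M PX HX).
        eapply Rle_trans. apply (notstop_bound M N PX PY HX HYp n (x ^ j) (pow_lt x j ltac:(lra)) j).
        apply Rplus_le_compat_r. eapply Rle_trans. apply (big_mass_le M PX j a HX Ha0 ltac:(lia)).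
        specialize (HK j ltac:(lia) ltac:(lia)). fold a in HK. eapply Rle_trans. apply HK.
        unfold Rdiv. rewrite Rplus_0_l. apply Rmult_le_compat_r. left. apply Rinv_0_lt_compat, pow_lt, lt_0_INR; lia.
        apply Rle_abs.
      + rewrite (pind_true (j < m1)%nat) by lia.
        assert (alive M PX (int_stop N PX PY n) j <= 1).
        { eapply Rle_trans. apply (alive_le_notstop M PX HX). rewrite <- (P_total M PX HX j). apply lsum_le.
          intros. apply pind_le. apply (P_nonneg M); auto. }
        lra.
    - rewrite !lsum_plus, lsum_scal, lsum_swap.
      pose proof (lsum_count_lt m1 (S m)). pose proof (sum_inv_sq (S m)). pose proof (Rabs_pos K).
      assert (lsum (fun y => lsum (fun j => Rmin (PY y) (2 * x ^ j)) (seq 0 (S m))) (words N n) <= entropy N PY n / a + C1).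
      { apply Rle_trans with (lsum (fun y => ent1 (PY y) / a + PY y * C1) (words N n)).
        - apply lsum_le. intros y Hy. apply words_In in Hy. apply min_sum; auto. split. apply (P_nonneg N); auto.
          apply (P_le1 N); tauto.
        - rewrite lsum_plus. rewrite (lsum_ext (fun y => PY y * C1) (fun y => C1 * PY y)) by (intros; ring). rewrite lsum_scal, (P_total N PY HYp).
          unfold Rdiv. rewrite (lsum_ext (fun y => ent1 (PY y) * / a) (fun y => / a * ent1 (PY y))) by (intros; ring). rewrite lsum_scal.
          unfold entropy, ent1. right; ring. }
      unfold C2. nra. }
  intros eta Heta.
  destruct (Hlim (eps * a / 4)) as [[N0 HN0] _]. { unfold Rdiv; nra. }
  destruct (INR_unbounded (4 * C2 / eps)) as [N1 HN1].
  exists (Nat.max (Nat.max N0 N1) 1). intros n Hn.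
  destruct (expected_from_alive M PX HX (int_stop N PX PY n) (C2 + entropy N PY n / a) (HB n)) as [e [He Hle]].
  exists e. split; auto.
  assert (Hn0 : 0 < INR n) by (apply lt_0_INR; lia).
  assert (HN1n : INR N1 <= INR n) by (apply le_INR; lia).
  specialize (HN0 n ltac:(lia)).
  assert (e / INR n <= C2 / INR n + (entropy N PY n / INR n) / a).
  { unfold Rdiv. apply Rle_trans with ((C2 + entropy N PY n * / a) * / INR n).
    apply Rmult_le_compat_r. left; apply Rinv_0_lt_compat; auto. lra. right. field. lra. }
  assert (C2 / INR n <= eps / 4).
  { unfold Rdiv. apply Rmult_le_reg_r with (INR n); auto. rewrite Rmult_assoc, Rinv_l, Rmult_1_r by lra.
    unfold Rdiv in HN1. apply Rmult_lt_compat_r with (r := eps / 4) in HN1; [|lra].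
    replace (4 * C2 * / eps * (eps / 4)) with C2 in HN1 by (field; lra). nra. }
  assert ((entropy N PY n / INR n) / a <= HY / a + eps / 4).
  { unfold Rdiv at 1. apply Rle_trans with ((HY + eps * a / 4) * / a).
    apply Rmult_le_compat_r. left; apply Rinv_0_lt_compat; auto. lra. right. field. lra. }
  lra.
Qed.


Theorem theorem4 (M N : nat) (PX PY : list nat -> R) (hl hu HY : R) :
  process M PX -> process N PY ->
  is_Hlower M PX hl -> is_Hupper M PX hu ->
  is_limsup (fun n => entropy N PY n / INR n) HY ->
  (* (i): L*_int <= H(Y)/H_lower(X)  (trivial when H_lower(X) = 0) *)
  (lower_tail M PX hl -> 0 < hl ->
     forall eps, 0 < eps -> int_achievable M N PX PY (HY / hl + eps)) /\
  (* (ii): L* >= H(Y)/H_upper(X), i.e. every achievable rate L has L * H_upper(X) >= H(Y) *)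
  (upper_tail M PX hu ->
     forall L, achievable M N PX PY L -> HY <= L * hu).
Proof.
  intros HX HYp Hl Hu Hlim. split.
  - intros. apply (part1 M N PX PY hl HY); auto.
  - intros. apply (part2 M N PX PY hu HY); auto.
Qed.
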